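(* Let $a\in(0,\frac23]$ and $f\in U_+$. For $x\in\mathbb R$ let $X^x_0=x$, $X^x_{n+1}=aX^x_n+\xi_{n+1}$, all driven by the same sequence $(\xi_n)$, and $\tau_x=\inf\{n\ge0:X^x_n<0\}$. Then for any $x,y\in[0,\frac1{1-a}]$ with $f(x)=f(y)$ we have $\tau_x=\tau_y$ and \[ f(X^x_{n\wedge\tau_x})=f(X^y_{n\wedge\tau_y})\quad\text{for all } n\ge1. \]
   Context: Let $p\in(0,1)$, $q=1-p$, and let $\xi_1,\xi_2,\dots$ be i.i.d. with $\mathbb P(\xi_1=1)=p$, $\mathbb P(\xi_1=-1)=q$. For $a\in(0,1)$ define $T_a$ by $T_a(x)=\frac1a(x+1)$ if $0\le x<1$ and $x\le\frac{2a-1}{1-a}$, and $T_a(x)=\frac1a(x-1)$ if $1\le x\le\frac1{1-a}$. Let $I_a=\big(\frac{2a-1}{1-a},1\big)$ and $\varkappa_a=\inf\{k\ge0:T_a^k(0)\in I_a\}$ ($\inf\emptyset=\infty$); the points $T_a^k(0)$ are defined for $0\le k\le\varkappa_a$. Let $U_+$ be the set of functions $f:\mathbb R\to\mathbb R$ of the form $f(x)=\sum_{k=0}^{\varkappa_a}u_k\mathbb 1\{x\ge T_a^k(0)\}$ with all $u_k>0$ and $\sum_k u_k<\infty$. *)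

(* Defs.v *)
From Stdlib Require Import Reals Lra.
From Coquelicot Require Import Coquelicot.
Open Scope R_scope.

(* The map T_a, made total: outside its domain of definition it returns x
   (junk); this never matters for the points T_a^k(0), k <= kappa_a. *)
Definition Ta (a x : R) : R :=
  if Rle_dec 0 x then
    if Rlt_dec x 1 then
      if Rle_dec x ((2*a - 1) / (1 - a)) then (x + 1) / a else x
    else if Rle_dec x (1 / (1 - a)) then (x - 1) / a else x
  else x.

Definition orb (a : R) (k : nat) : R := Nat.iter k (Ta a) 0.

Definition inIa (a x : R) : bool :=
  if Rlt_dec ((2*a - 1) / (1 - a)) x then
    if Rlt_dec x 1 then true else false
  else false.

(* alive a k  <->  k <= kappa_a  (no T_a^j(0) with j < k lies in I_a) *)
Fixpoint alive (a : R) (k : nat) : bool :=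
  match k with
  | O => true
  | S j => alive a j && negb (inIa a (orb a j))
  end.

Definition U_plus (a : R) (f : R -> R) : Prop :=
  exists u : nat -> R,
    (forall k, 0 < u k) /\
    ex_series (fun k => if alive a k then u k else 0) /\
    forall x, is_series
      (fun k => if alive a k then u k * (if Rle_dec (orb a k) x then 1 else 0) else 0)
      (f x).

Fixpoint Xp (a : R) (xi : nat -> R) (x : R) (n : nat) : R :=
  match n with
  | O => x
  | S m => a * Xp a xi x m + xi (S m)
  end.

(* t is tau = inf{n >= 0 : X_n < 0} (None = +oo) *)
Definition is_hitting_time (X : nat -> R) (t : option nat) : Prop :=
  match t with
  | Some n => X n < 0 /\ (forall m, (m < n)%nat -> 0 <= X m)
  | None => forall m, 0 <= X m
  end.

Definition stopped (n : nat) (t : option nat) : nat :=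
  match t with
  | Some k => Nat.min n k
  | None => n
  end.

(* Main.v *)
Require Import Defs.
From Stdlib Require Import Reals Lra Lia ZArith.
From Coquelicot Require Import Coquelicot.
Open Scope R_scope.

Lemma psum_le (A B : nat -> R) : (forall n, A n <= B n) ->
  forall n, sum_n A n <= sum_n B n.
Proof.
  intros H n; induction n.
  - rewrite !sum_O; auto.
  - rewrite !sum_Sn; unfold plus; simpl. specialize (H (S n)); lra.
Qed.

Lemma psum_gap (A B : nat -> R) : (forall n, A n <= B n) ->
  forall k n, (k <= n)%nat -> sum_n A n + (B k - A k) <= sum_n B n.
Proof.
  intros H k n Hkn; induction n.
  - assert (k = 0%nat) by lia; subst. rewrite !sum_O; lra.
  - destruct (Nat.eq_dec k (S n)).
    + subst. rewrite !sum_Sn; unfold plus; simpl.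
      pose proof (psum_le A B H n); lra.
    + assert (k <= n)%nat by lia. rewrite !sum_Sn; unfold plus; simpl.
      specialize (IHn H0). specialize (H (S n)); lra.
Qed.

Lemma series_strict (A B : nat -> R) SA SB k :
  is_series A SA -> is_series B SB -> (forall n, A n <= B n) -> A k < B k ->
  SA < SB.
Proof.
  intros HA HB Hle Hk.
  assert (L1 : is_lim_seq (fun n => sum_n A n + (B k - A k)) (SA + (B k - A k))).
  { apply is_lim_seq_plus'. exact HA. apply is_lim_seq_const. }
  assert (L2 : is_lim_seq (sum_n B) SB) by exact HB.
  assert (E : eventually (fun n => sum_n A n + (B k - A k) <= sum_n B n)).
  { exists k. intros n Hn. apply psum_gap; auto. }
  pose proof (is_lim_seq_le_loc _ _ _ _ E L1 L2) as R. simpl in R. lra.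
Qed.

Lemma Ta_cases a x : Ta a x = x \/ Ta a x = (x+1)/a \/ Ta a x = (x-1)/a.
Proof.
  unfold Ta. repeat destruct Rle_dec; repeat destruct Rlt_dec; auto.
Qed.

Definition dyadic (x : R) := x = 0 \/ exists q d : Z, (0 < d)%Z /\ x = IZR (2*q+1) / IZR (2*d).

Lemma dyadic_Ta x : dyadic x -> dyadic (Ta (2/3) x).
Proof.
  intros H. destruct (Ta_cases (2/3) x) as [E|[E|E]]; rewrite E; auto.
  - destruct H as [H|[q [d [Hd H]]]]; right.
    + subst. exists 1%Z, 1%Z. split; [lia|]. simpl. field.
    + exists (3*q+1+3*d)%Z, (2*d)%Z. split; [lia|]. subst.
      rewrite ?mult_IZR, ?plus_IZR, ?minus_IZR, ?mult_IZR, ?plus_IZR, ?mult_IZR.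
      assert (IZR d <> 0) by (apply not_0_IZR; lia). generalize dependent (IZR d); generalize (IZR q); intros; field; auto.
  - destruct H as [H|[q [d [Hd H]]]]; right.
    + subst. exists (-2)%Z, 1%Z. split; [lia|]. simpl. field.
    + exists (3*q+1-3*d)%Z, (2*d)%Z. split; [lia|]. subst.
      repeat rewrite ?mult_IZR, ?plus_IZR, ?minus_IZR.
      assert (IZR d <> 0) by (apply not_0_IZR; lia). generalize dependent (IZR d); generalize (IZR q); intros; field; auto.
Qed.

Lemma orb_not1 k : orb (2/3) k <> 1.
Proof.
  assert (D : dyadic (orb (2/3) k)).
  { induction k. left; reflexivity. apply dyadic_Ta, IHk. }
  destruct D as [D|[q [d [Hd D]]]]; rewrite D. lra.
  intro E. assert (H2 : IZR (2*d) <> 0) by (apply not_0_IZR; lia).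
  assert (H0 : IZR (2*q+1) = IZR (2*d)).
  { rewrite <- (Rmult_1_l (IZR (2*d))), <- E. field; auto. }
  apply eq_IZR in H0. lia.
Qed.

Lemma div_le w b t : 0 < b -> (w / b <= t <-> w <= t * b).
Proof. intros Hb. set (r := w / b). assert (w = r * b) by (unfold r; field; lra).
  rewrite H. split; intros; nra. Qed.
Lemma le_div w b t : 0 < b -> (t <= w / b <-> t * b <= w).
Proof. intros Hb. set (r := w / b). assert (w = r * b) by (unfold r; field; lra).
  rewrite H. split; intros; nra. Qed.

Section S.
Variable a : R.
Hypothesis Ha0 : 0 < a.
Hypothesis Ha1 : a <= 2/3.

Local Notation M := (1 / (1 - a)).
Lemma M_fact : M * (1 - a) = 1.
Proof. field; lra. Qed.
Lemma M_pos : 1 <= M.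
Proof. apply le_div; lra. Qed.
Lemma c_eq : (2*a - 1)/(1 - a) = a * M - 1.
Proof. field; lra. Qed.
Lemma c_le1 : a * M - 1 <= 1.
Proof. pose proof M_fact. nra. Qed.

Lemma Ta_range z : 0 <= z <= M -> 0 <= Ta a z <= M.
Proof.
  intros Hz. pose proof M_fact. pose proof c_eq.
  unfold Ta. repeat destruct Rle_dec; repeat destruct Rlt_dec; try lra.
  all: split; [apply le_div; lra | apply div_le; [lra | nra]].
Qed.

Lemma orb_range k : 0 <= orb a k <= M.
Proof. pose proof M_pos. induction k. simpl; lra. apply Ta_range, IHk. Qed.

Definition Pc (x y : R) := forall k, alive a k = true -> (orb a k <= x <-> orb a k <= y).

Lemma step x y e : 0 <= x <= M -> 0 <= y <= M -> Pc x y -> (e = 1 \/ e = -1) ->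
  Pc (a*x+e) (a*y+e).
Proof.
  intros Hx Hy HP He k Hk. pose proof M_fact. pose proof c_eq as Ce.
  pose proof (orb_range k) as Hz. pose proof c_le1.
  set (z := orb a k) in *.
  assert (Hs : orb a (S k) = Ta a z) by reflexivity.
  destruct He as [He|He]; subst e.
  - destruct (Rlt_dec z 1).
    + split; intros; nra.
    + assert (Hk1 : alive a (S k) = true).
      { simpl. rewrite Hk. unfold inIa. fold z.
        repeat destruct Rlt_dec; auto; lra. }
      assert (E : Ta a z = (z - 1)/a).
      { unfold Ta. repeat destruct Rle_dec; repeat destruct Rlt_dec; lra. }
      specialize (HP _ Hk1). rewrite Hs, E, !div_le in HP by lra.
      rewrite !(Rmult_comm _ a) in HP.
      split; intros.
      * assert (z - 1 <= a * y) by (apply HP; lra). lra.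
      * assert (z - 1 <= a * x) by (apply HP; lra). lra.
  - destruct (Rle_dec z (a*M-1)).
    + assert (z < 1).
      { destruct (Rle_lt_or_eq_dec z 1) as [h|h]; [lra|exact h|].
        exfalso. assert (Ea : a = 2/3) by nra. apply (orb_not1 k). rewrite <- Ea. exact h. }
      assert (Hk1 : alive a (S k) = true).
      { simpl. rewrite Hk. unfold inIa. fold z. rewrite Ce.
        repeat destruct Rlt_dec; auto; lra. }
      assert (E : Ta a z = (z + 1)/a).
      { unfold Ta. rewrite Ce. repeat destruct Rle_dec; repeat destruct Rlt_dec; lra. }
      specialize (HP _ Hk1). rewrite Hs, E, !div_le in HP by lra.
      rewrite !(Rmult_comm _ a) in HP.
      split; intros.
      * assert (z + 1 <= a * y) by (apply HP; lra). lra.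
      * assert (z + 1 <= a * x) by (apply HP; lra). lra.
    + split; intros; nra.
Qed.
End S.

Section Main.
Variable a : R.
Hypothesis Ha0 : 0 < a.
Hypothesis Ha1 : a <= 2/3.
Local Notation M := (1 / (1 - a)).

Lemma X_ub xi x : x <= M -> (forall n, (1 <= n)%nat -> xi n = 1 \/ xi n = -1) ->
  forall n, Xp a xi x n <= M.
Proof.
  intros Hx Hxi n. assert (1/(1-a)*(1-a) = 1) by (field; lra). induction n; simpl; auto.
  assert (xi (S n) <= 1) by (destruct (Hxi (S n)); lia || lra).
  nra.
Qed.

Lemma P_zero u v : Pc a u v -> (0 <= u <-> 0 <= v).
Proof. intros H. apply (H 0%nat). reflexivity. Qed.

Lemma f_cell f u v : U_plus a f -> f u = f v -> Pc a u v.
Proof.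
  intros [uu [Hpos [_ Hser]]] Huv k Hk.
  destruct (Rle_dec (orb a k) u) as [h1|h1], (Rle_dec (orb a k) v) as [h2|h2]; try tauto; exfalso.
  - assert (f v < f u); [|lra].
    apply (series_strict _ _ _ _ k (Hser v) (Hser u)).
    + intros n. destruct (alive a n); [|lra]. pose proof (Hpos n).
      destruct (Rle_dec (orb a n) v), (Rle_dec (orb a n) u); lra.
    + rewrite Hk. pose proof (Hpos k).
      destruct (Rle_dec (orb a k) v), (Rle_dec (orb a k) u); try tauto; lra.
  - assert (f u < f v); [|lra].
    apply (series_strict _ _ _ _ k (Hser u) (Hser v)).
    + intros n. destruct (alive a n); [|lra]. pose proof (Hpos n).
      destruct (Rle_dec (orb a n) v), (Rle_dec (orb a n) u); lra.
    + rewrite Hk. pose proof (Hpos k).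
      destruct (Rle_dec (orb a k) v), (Rle_dec (orb a k) u); try tauto; lra.
Qed.

Lemma cell_f f u v : U_plus a f -> Pc a u v -> f u = f v.
Proof.
  intros [uu [Hpos [_ Hser]]] HP.
  rewrite <- (is_series_unique _ _ (Hser u)), <- (is_series_unique _ _ (Hser v)).
  apply Series_ext. intros n. destruct (alive a n) eqn:E; auto.
  specialize (HP n E).
  destruct (Rle_dec (orb a n) v), (Rle_dec (orb a n) u); tauto || reflexivity.
Qed.

Lemma L_inv xi x y : (forall n, (1 <= n)%nat -> xi n = 1 \/ xi n = -1) ->
  x <= M -> y <= M -> Pc a x y ->
  forall n, (forall m, (m < n)%nat -> 0 <= Xp a xi x m /\ 0 <= Xp a xi y m) ->
  Pc a (Xp a xi x n) (Xp a xi y n).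
Proof.
  intros Hxi Hx Hy HP n. induction n; intros H; simpl; auto.
  apply (step a Ha0 Ha1).
  - split. apply H; lia. apply (X_ub xi x Hx Hxi).
  - split. apply H; lia. apply (X_ub xi y Hy Hxi).
  - apply IHn. intros m Hm. apply H. lia.
  - apply Hxi. lia.
Qed.
End Main.

Theorem proposition2p3 (a : R) (f : R -> R) (xi : nat -> R) (x y : R)
  (tx ty : option nat) :
  0 < a -> a <= 2/3 ->
  U_plus a f ->
  (forall n, (1 <= n)%nat -> xi n = 1 \/ xi n = -1) ->
  0 <= x -> x <= 1 / (1 - a) ->
  0 <= y -> y <= 1 / (1 - a) ->
  f x = f y ->
  is_hitting_time (Xp a xi x) tx ->
  is_hitting_time (Xp a xi y) ty ->
  tx = ty /\
  (forall n, (1 <= n)%nat ->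
     f (Xp a xi x (stopped n tx)) = f (Xp a xi y (stopped n ty))).
Proof.
  intros Ha0 Ha1 HU Hxi Hx0 Hx1 Hy0 Hy1 Hf Htx Hty.
  pose proof (f_cell a f x y HU Hf) as HP.
  pose proof (L_inv a Ha0 Ha1 xi x y Hxi Hx1 Hy1 HP) as L.
  destruct tx as [n|], ty as [m|]; simpl in Htx, Hty.
  - assert (n = m).
    { destruct (lt_eq_lt_dec n m) as [[h|h]|h]; auto; exfalso.
      - assert (Pc a (Xp a xi x n) (Xp a xi y n)).
        { apply L. intros j Hj. split. apply Htx; lia. apply Hty; lia. }
        apply P_zero in H. destruct Htx as [Hn _]. assert (0 <= Xp a xi y n) by (apply Hty; lia).
        apply H in H0. lra.
      - assert (Pc a (Xp a xi x m) (Xp a xi y m)).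
        { apply L. intros j Hj. split. apply Htx; lia. apply Hty; lia. }
        apply P_zero in H. destruct Hty as [Hn _]. assert (0 <= Xp a xi x m) by (apply Htx; lia).
        apply H in H0. lra. }
    subst m. split; auto. intros k _. simpl. apply (cell_f a f); [exact HU|]. apply L.
    intros j Hj. split. apply Htx; lia. apply Hty; lia.
  - exfalso. assert (Pc a (Xp a xi x n) (Xp a xi y n)).
    { apply L. intros j Hj. split. apply Htx; lia. apply Hty. }
    apply P_zero in H. destruct Htx as [Hn _]. pose proof (Hty n). apply H in H0. lra.
  - exfalso. assert (Pc a (Xp a xi x m) (Xp a xi y m)).
    { apply L. intros j Hj. split. apply Htx. apply Hty; lia. }
    apply P_zero in H. destruct Hty as [Hn _]. pose proof (Htx m). apply H in H0. lra.
  - split; auto. intros k _. simpl. apply (cell_f a f); [exact HU|]. apply L.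
    intros j Hj. split. apply Htx. apply Hty.
Qed.
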